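(* Let $N \ge 3$, let $0 \le z_1 < \dots < z_N < 1$ and let $\mu = \sum_{i=1}^N N^{-1}\delta_{z_i}$ be the uniform discrete probability distribution on $[0,1]$. Then the eigenvalues of the $\mu$-Laplacian $\Delta^\mu$ are $\lambda_l = -2N^2 + 2N^2\cos(2\pi l/N)$ for $l\in\{0,\dots,N-1\}$, with corresponding eigenfunctions $f_l \in \mathscr D^2_\mu$ given by: (1) $f_0$ is the constant function with value $1$; (2) for $0 < l < N/2$: $f_l|_{[0,z_1]\cup(z_N,1]} = 0$ and $f_l|_{(z_j,z_{j+1}]} = \operatorname{Im}\big(e^{2\pi\mathbf i\, jl/N}\big)$ for $j\in\{1,\dots,N-1\}$; (3) for $N/2 \le l \le N-1$: $f_l|_{[0,z_1]\cup(z_N,1]} = 1$ and $f_l|_{(z_j,z_{j+1}]} = \operatorname{Re}\big(e^{2\pi\mathbf i\, jl/N}\big)$ for $j\in\{1,\dots,N-1\}$.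
   Context: $\delta_z$ is the Dirac measure at $z$; $\mathbf i$ is the imaginary unit. $L^2_\mu$ is the space of $\mu$-a.e. classes of real square-integrable functions on $[0,1]$ with inner product $\langle f,g\rangle_\mu = \sum_{i=1}^N \alpha_i f(z_i)g(z_i)$ (here $\alpha_i = 1/N$). $\mathscr D^1_\mu$ is the set of functions $f$ on $[0,1]$ for which there is $f' \in L^2_\mu$ with $f(0)=f(1)$ and $f(x) = f(0) + \int \mathbf 1_{[0,x)} f'\,d\mu$ for all $x\in[0,1]$ (with $[0,0)=\emptyset$); then $\nabla^\mu f := f'$, explicitly $\nabla^\mu f(z_n) = (f(z_{n+1})-f(z_n))/\alpha_n$ for $n<N$ and $\nabla^\mu f(z_N) = (f(z_1)-f(z_N))/\alpha_N$. Every class of $L^2_\mu$ has a representative in $\mathscr D^1_\mu$. The energy form is $\mathcal E(f,g) = \langle \nabla^\mu f, \nabla^\mu g\rangle_\mu$. A function $f \in \mathscr D^1_\mu$ belongs to $\mathscr D^2_\mu$ if there is $h \in L^2_\mu$ with $\mathcal E(f,g) = -\langle h, g\rangle_\mu$ for all $g\in\mathscr D^1_\mu$, and then $\Delta^\mu f := h$. *)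

(* Defs.v *)
From HB Require Import structures.
From mathcomp Require Import all_boot all_order all_algebra.
From mathcomp Require Import all_classical all_reals all_analysis.
Set Implicit Arguments. Unset Strict Implicit. Unset Printing Implicit Defensive.
Import Order.TTheory GRing.Theory Num.Theory.
Local Open Scope ring_scope.

(* Atoms z 1 < ... < z N (1-indexed, as in the paper), each of mass
   alpha N = 1/N.  Functions on [0,1] are modelled as R -> R; only their
   values on [0,1] matter. *)
Section Defs.
Variable R : realType.

Definition alpha (N : nat) : R := (N%:R)^-1.

Definition ipmu (N : nat) (z : nat -> R) (f g : R -> R) : R :=
  \sum_(1 <= i < N.+1) alpha N * f (z i) * g (z i).

(* f is in D^1_mu : there is f' with f(0) = f(1) and
   f(x) = f(0) + int 1_[0,x) f' dmu  for all x in [0,1];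
   the integral against mu = sum_i alpha_i delta_{z_i} is written out. *)
Definition D1mu (N : nat) (z : nat -> R) (f : R -> R) : Prop :=
  exists f' : R -> R, f 0 = f 1 /\
    forall x : R, 0 <= x <= 1 ->
      f x = f 0 + \sum_(1 <= i < N.+1)
                    alpha N * (if (0 <= z i) && (z i < x) then f' (z i) else 0).

Definition gradmu (N : nat) (z : nat -> R) (f : R -> R) (n : nat) : R :=
  if (n < N)%N then (f (z n.+1) - f (z n)) / alpha N
  else (f (z 1) - f (z N)) / alpha N.

Definition energy (N : nat) (z : nat -> R) (f g : R -> R) : R :=
  \sum_(1 <= n < N.+1) alpha N * gradmu N z f n * gradmu N z g n.

(* f is in D^2_mu and Delta^mu f = h (as classes in L^2_mu) *)
Definition laplacian_is (N : nat) (z : nat -> R) (f h : R -> R) : Prop :=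
  D1mu N z f /\ forall g, D1mu N z g -> energy N z f g = - ipmu N z h g.

(* f is an eigenfunction of Delta^mu with eigenvalue lam:
   f in D^2_mu, Delta^mu f = lam f in L^2_mu, and f <> 0 in L^2_mu. *)
Definition eigenfunction (N : nat) (z : nat -> R) (f : R -> R) (lam : R) : Prop :=
  laplacian_is N z f (fun x => lam * f x) /\
  exists i, (1 <= i <= N)%N /\ f (z i) != 0.

Definition lambda (N l : nat) : R :=
  - 2 * N%:R ^+ 2 + 2 * N%:R ^+ 2 * cos (2 * pi * l%:R / N%:R).

(* The description (1)-(3) of f_l on [0,1].
   Im(e^{2 pi i j l / N}) = sin(2 pi j l / N), Re(...) = cos(2 pi j l / N). *)
Definition eigf_spec (N : nat) (z : nat -> R) (l : nat) (f : R -> R) : Prop :=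
  if l == 0%N then (forall x : R, 0 <= x <= 1 -> f x = 1)
  else if (2 * l < N)%N then
    (forall x : R, (0 <= x <= z 1) \/ (z N < x <= 1) -> f x = 0) /\
    (forall j : nat, (1 <= j <= N.-1)%N -> forall x : R, z j < x <= z j.+1 ->
        f x = sin (2 * pi * (j * l)%:R / N%:R))
  else
    (forall x : R, (0 <= x <= z 1) \/ (z N < x <= 1) -> f x = 1) /\
    (forall j : nat, (1 <= j <= N.-1)%N -> forall x : R, z j < x <= z j.+1 ->
        f x = cos (2 * pi * (j * l)%:R / N%:R)).

End Defs.

(* Main.v *)
Require Import Defs.
From HB Require Import structures.
From mathcomp Require Import all_boot all_order all_algebra.
From mathcomp Require Import all_classical all_reals all_analysis.
From mathcomp Require Import ring lra zify.
Import Order.TTheory GRing.Theory Num.Theory.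
Local Open Scope ring_scope.


Definition V {R : realType} (N : nat) (z : nat -> R) (f : R -> R) (k : nat) : R :=
  f (z (k %% N).+1).

Lemma V_per {R : realType} N z (f : R -> R) k : V N z f (k + N) = V N z f k.
Proof. by rewrite /V modnDr. Qed.

Lemma V_lt {R : realType} N z (f : R -> R) k : (k < N)%N -> V N z f k = f (z k.+1).
Proof. by move=> H; rewrite /V modn_small. Qed.

Lemma V_N {R : realType} N z (f : R -> R) : V N z f N = f (z 1%N).
Proof. by rewrite /V modnn. Qed.

Lemma shiftP {R : realType} (p : nat -> R) N : (forall k, p (k + N)%N = p k) ->
  \sum_(0 <= k < N) p k.+1 = \sum_(0 <= k < N) p k.
Proof.
move=> Hp; case: N Hp => [|n] Hp; first by rewrite !big_geq.
rewrite big_nat_recr // big_nat_recl //.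
by rewrite -(Hp 0%N) add0n addrC.
Qed.

Lemma permod {R : realType} (p : nat -> R) N : (forall k, p (k + N)%N = p k) ->
  forall k, p (k %% N)%N = p k.
Proof.
move=> Hp k; rewrite {2}(divn_eq k N); elim: (k %/ N)%N => [|q IH].
  by rewrite mul0n add0n.
by rewrite IH mulSnr -addnA (addnC N) addnA Hp.
Qed.

Lemma energyE {R : realType} N (z : nat -> R) f g : (0 < N)%N ->
  energy N z f g = N%:R * \sum_(0 <= k < N) (V N z f k.+1 - V N z f k) * (V N z g k.+1 - V N z g k).
Proof.
move=> N0; rewrite /energy big_add1 /= big_distrr /=.
apply: eq_big_nat => k /andP[_ Hk].
have Nn0 : (N%:R : R) != 0 by rewrite pnatr_eq0 -lt0n.
rewrite /gradmu /alpha; case: (ltnP k.+1 N) => H.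
  rewrite !V_lt //.
  by field.
have E : k.+1 = N by apply/eqP; rewrite eqn_leq Hk H.
rewrite E !V_N !V_lt // E.
by field.
Qed.

Lemma ipmuE {R : realType} N (z : nat -> R) h g :
  ipmu N z h g = N%:R^-1 * \sum_(0 <= k < N) V N z h k.+1 * V N z g k.+1.
Proof.
rewrite (shiftP (fun k => V N z h k * V N z g k)); last by move=> k; rewrite !V_per.
rewrite /ipmu big_add1 /= big_distrr /=.
apply: eq_big_nat => k /andP[_ Hk].
by rewrite !V_lt // /alpha mulrA.
Qed.

Lemma sbp {R : realType} N (v w : nat -> R) :
  (forall k, v (k + N)%N = v k) -> (forall k, w (k + N)%N = w k) ->
  \sum_(0 <= k < N) (v k.+1 - v k) * (w k.+1 - w k) =
  - \sum_(0 <= k < N) (v k.+2 - 2 * v k.+1 + v k) * w k.+1.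
Proof.
move=> Hv Hw.
have -> : \sum_(0 <= k < N) (v k.+1 - v k) * (w k.+1 - w k) =
  \sum_(0 <= k < N) (v k.+1 - v k) * w k.+1 - \sum_(0 <= k < N) (v k.+1 - v k) * w k.
  by rewrite -sumrB; apply: eq_bigr => k _; ring.
rewrite -(shiftP (fun k => (v k.+1 - v k) * w k)); last first.
  by move=> k /=; rewrite -!addSn Hv Hw Hv.
rewrite -sumrB -sumrN; apply: eq_bigr => k _; ring.
Qed.

Lemma energy_lap {R : realType} N (z : nat -> R) f g : (0 < N)%N ->
  energy N z f g = - (N%:R^-1 * \sum_(0 <= k < N)
     (N%:R ^+ 2 * (V N z f k.+2 - 2 * V N z f k.+1 + V N z f k)) * V N z g k.+1).
Proof.
move=> N0; rewrite energyE // sbp; last by move=> k; rewrite V_per.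
  2: by move=> k; rewrite V_per.
have Nn0 : (N%:R : R) != 0 by rewrite pnatr_eq0 -lt0n.
rewrite mulrN; congr (- _); rewrite !big_distrr; apply: eq_bigr => k _ /=.
by field.
Qed.

Lemma energyC {R : realType} N (z : nat -> R) f g : energy N z f g = energy N z g f.
Proof. by rewrite /energy; apply: eq_bigr => n _; rewrite mulrAC. Qed.


Lemma natS_mul {R : realType} (k : nat) (a : R) : k.+1%:R * a = k%:R * a + a.
Proof. by rewrite -addn1 natrD mulrDl mul1r. Qed.

Lemma cos_eig {R : realType} (a : R) (k : nat) :
  cos (k.+2%:R * a) - 2 * cos (k.+1%:R * a) + cos (k%:R * a) =
  (2 * cos a - 2) * cos (k.+1%:R * a).
Proof.
have -> : k%:R * a = k.+1%:R * a - a by rewrite natS_mul addrK.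
rewrite natS_mul cosD cosB; ring.
Qed.

Lemma sin_eig {R : realType} (a : R) (k : nat) :
  sin (k.+2%:R * a) - 2 * sin (k.+1%:R * a) + sin (k%:R * a) =
  (2 * cos a - 2) * sin (k.+1%:R * a).
Proof.
have -> : k%:R * a = k.+1%:R * a - a by rewrite natS_mul addrK.
rewrite natS_mul sinD sinB; ring.
Qed.

Lemma sin_per {R : realType} (x : R) n : sin (x + n%:R * (pi *+ 2)) = sin x.
Proof.
elim: n => [|n IH]; first by rewrite mul0r addr0.
by rewrite natS_mul addrA sinD2pi IH.
Qed.

Lemma cos_per {R : realType} (x : R) n : cos (x + n%:R * (pi *+ 2)) = cos x.
Proof.
elim: n => [|n IH]; first by rewrite mul0r addr0.
by rewrite natS_mul addrA cosD2pi IH.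
Qed.

Lemma cos_sum {R : realType} (y : R) n :
  2 * sin y * \sum_(0 <= l < n) cos (l%:R * (y * 2)) = sin (n%:R * (y * 2) - y) + sin y.
Proof.
elim: n => [|n IH]; first by rewrite big_geq // mulr0 mul0r sub0r sinN addNr.
rewrite big_nat_recr //= mulrDr IH.
have -> : n.+1%:R * (y * 2) - y = n%:R * (y * 2) + y by rewrite natS_mul; ring.
rewrite sinB sinD; ring.
Qed.

Lemma cos_sum0 {R : realType} (N d : nat) : (0 < d)%N -> (d < N)%N ->
  \sum_(0 <= l < N) cos (l%:R * (2 * pi * d%:R / N%:R)) = 0 :> R.
Proof.
move=> d0 dN.
have N0 : (0 < N)%N by apply: leq_trans dN.
have Nn0 : (N%:R : R) != 0 by rewrite pnatr_eq0 -lt0n.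
have Npos : (0 : R) < N%:R by rewrite ltr0n.
set y : R := pi * d%:R / N%:R.
have -> : 2 * pi * d%:R / N%:R = y * 2 by rewrite /y; field.
have sy : 0 < sin y.
  apply: sin_gt0_pi; apply/andP; split.
    by rewrite /y divr_gt0 // mulr_gt0 ?pi_gt0 // ltr0n.
  by rewrite /y ltr_pdivrMr // ltr_pM2l ?pi_gt0 // ltr_nat.
have := cos_sum y N.
have -> : N%:R * (y * 2) - y = - y + d%:R * (pi *+ 2) by rewrite /y mulr2n; field.
rewrite sin_per sinN addNr => /eqP; rewrite mulf_eq0 mulf_eq0 => /orP[/orP[]|/eqP //].
  by rewrite pnatr_eq0.
by rewrite gt_eqF.
Qed.


Lemma mono {R : realType} N (z : nat -> R) :
  (forall i : nat, (1 <= i < N)%N -> z i < z i.+1) ->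
  forall i j, (1 <= i)%N -> (i < j)%N -> (j <= N)%N -> z i < z j.
Proof.
move=> hz i; elim=> [|j IH] // Hi Hij HjN.
rewrite ltnS leq_eqVlt in Hij; case/orP: Hij => [/eqP Eij|Hij].
  by subst; apply: hz; rewrite Hi.
apply: lt_trans (IH Hi Hij (ltnW HjN)) (hz j _).
by rewrite HjN (leq_trans Hi (ltnW Hij)).
Qed.

Arguments mono {R N z}.

Lemma mono_le {R : realType} N (z : nat -> R) :
  (forall i : nat, (1 <= i < N)%N -> z i < z i.+1) ->
  forall i j, (1 <= i)%N -> (i <= j)%N -> (j <= N)%N -> z i <= z j.
Proof.
move=> hz i j Hi Hij HjN; rewrite leq_eqVlt in Hij; case/orP: Hij => [/eqP ->//|Hij].
exact: ltW (mono hz i j Hi Hij HjN).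
Qed.

Arguments mono_le {R N z}.

Lemma z_inj_eq {R : realType} N (z : nat -> R) :
  (forall i : nat, (1 <= i < N)%N -> z i < z i.+1) ->
  forall i k, (1 <= i <= N)%N -> (1 <= k <= N)%N -> (z i == z k) = (k == i).
Proof.
move=> hz i k /andP[i1 iN] /andP[k1 kN].
case: (ltngtP k i) => H.
- by rewrite gt_eqF ?(mono hz k i) // ltn_eqF.
- by rewrite lt_eqF ?(mono hz i k) // gtn_eqF.
- by rewrite H eqxx.
Qed.

Lemma sum_delta {R : realType} (F : nat -> R) m n i : (m <= i < n)%N ->
  \sum_(m <= k < n) (if k == i then F k else 0) = F i.
Proof.
move=> /andP[mi in_].
rewrite (@big_cat_nat _ _ _ i) ?(ltnW in_) //= (@big_cat_nat _ _ _ i.+1 i) //= big_nat1 eqxx.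
rewrite big_nat_cond big1 ?add0r; last first.
  by move=> k /andP[/andP[_ H] _]; rewrite ltn_eqF.
rewrite big_nat_cond big1 ?addr0 //.
by move=> k /andP[/andP[H _] _]; rewrite gtn_eqF.
Qed.

Lemma charE {R : realType} N (z : nat -> R) x j :
  (forall i, (1 <= i <= N)%N -> (i <= j)%N -> z i < x) ->
  (forall i, (1 <= i <= N)%N -> (j < i)%N -> x <= z i) ->
  forall i, (1 <= i <= N)%N -> (z i < x) = (i <= j)%N.
Proof.
move=> H1 H2 i Hi; case: (leqP i j) => H; first by rewrite H1.
by rewrite ltNge H2.
Qed.

Lemma sum_charR {R : realType} N (z : nat -> R) x j (F : nat -> R) : (j <= N)%N ->
  (forall i, (1 <= i <= N)%N -> 0 <= z i) ->
  (forall i, (1 <= i <= N)%N -> (z i < x) = (i <= j)%N) ->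
  \sum_(1 <= i < N.+1) (if (0 <= z i) && (z i < x) then F i else 0) =
  \sum_(1 <= i < j.+1) F i.
Proof.
move=> jN Hz Hc.
rewrite (@big_cat_nat _ _ _ j.+1) //=.
rewrite [X in _ + X]big_nat_cond [X in _ + X]big1 ?addr0; last first.
  move=> i /andP[/andP[H1 H2] _].
  have Hi : (0 < i <= N)%N by apply/andP; split; [apply: leq_ltn_trans (leq0n j) H1 | exact: H2].
  by rewrite Hc // leqNgt H1 andbF.
rewrite big_nat_cond [RHS]big_nat_cond; apply: eq_bigr => i /andP[/andP[H1 H2] _].
have Hi : (0 < i <= N)%N by apply/andP; split; [exact: H1 | exact: leq_trans (ltnSE H2) jN].
by rewrite Hz // Hc // -ltnS H2.
Qed.

Definition cnt {R : realType} (N : nat) (z : nat -> R) (x : R) : nat :=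
  (\sum_(1 <= i < N.+1) (nat_of_bool (z i < x)%R))%N.

Lemma cnt_char {R : realType} N (z : nat -> R) x j : (j <= N)%N ->
  (forall i, (1 <= i <= N)%N -> (z i < x) = (i <= j)%N) -> cnt N z x = j.
Proof.
move=> jN Hc; rewrite /cnt (@big_cat_nat _ _ _ j.+1) //=.
rewrite [X in (_ + X)%N]big_nat_cond [X in (_ + X)%N]big1 ?addn0; last first.
  move=> i /andP[/andP[H1 H2] _].
  have Hi : (0 < i <= N)%N by apply/andP; split; [apply: leq_ltn_trans (leq0n j) H1 | exact: H2].
  by rewrite Hc // leqNgt H1.
rewrite (_ : (\sum_(1 <= i < j.+1) (nat_of_bool (z i < x)%R))%N = (\sum_(1 <= i < j.+1) 1)%N).
  by rewrite sum_nat_const_nat subn1 muln1.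
rewrite big_nat_cond [RHS]big_nat_cond; apply: eq_bigr => i /andP[/andP[H1 H2] _].
have Hi : (0 < i <= N)%N by apply/andP; split; [exact: H1 | exact: leq_trans (ltnSE H2) jN].
by rewrite Hc // -ltnS H2.
Qed.

Lemma classify {R : realType} N (z : nat -> R) x : (0 < N)%N ->
  (forall i : nat, (1 <= i < N)%N -> z i < z i.+1) ->
  [\/ x <= z 1%N, z N < x | exists j, (1 <= j < N)%N /\ z j < x <= z j.+1].
Proof.
move=> N0 hz.
have [h|h] := leP x (z 1%N); first by apply: Or31.
have [h2|h2] := ltP (z N) x; first by apply: Or32.
apply: Or33.
suff: forall n, (1 <= n <= N)%N -> x <= z n -> exists j, (1 <= j < n)%N /\ z j < x <= z j.+1.
  move/(_ N); rewrite N0 leqnn => /(_ isT h2) [j [/andP[j1 jn] hj]].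
  by exists j; rewrite j1 jn.
elim=> [|n IH] /andP[n1 nN] hn; first by [].
case: n IH n1 nN hn => [|n] IH n1 nN hn; first by move: (lt_le_trans h hn); rewrite ltxx.
have [h3|h3] := leP x (z n.+1).
  have [j [/andP[j1 jn] hj]] := IH (ltnW nN) h3.
  by exists j; rewrite j1 (ltn_trans jn).
by exists n.+1; rewrite ltnSn h3 hn.
Qed.


Lemma D1_step {R : realType} N (z : nat -> R) (f : R -> R) :
  (0 < N)%N -> 0 <= z 1%N -> z N < 1 ->
  (forall i : nat, (1 <= i < N)%N -> z i < z i.+1) ->
  (forall x, 0 <= x <= 1 -> (x <= z 1%N) \/ (z N < x) -> f x = f (z 1%N)) ->
  (forall j x, (1 <= j < N)%N -> z j < x <= z j.+1 -> f x = f (z j.+1)) ->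
  D1mu N z f.
Proof.
move=> N0 z10 zN1 hz H0 Hj.
have Nn0 : (N%:R : R) != 0 by rewrite pnatr_eq0 -lt0n.
have zpos : forall i, (1 <= i <= N)%N -> 0 <= z i.
  by move=> i /andP[i1 iN]; apply: le_trans z10 (mono_le hz 1 i isT i1 iN).
set u := V N z f.
pose d i := u i - u i.-1.
pose f' := fun y => \sum_(1 <= i < N.+1) (if y == z i then N%:R * d i else 0).
have f'E : forall i, (1 <= i <= N)%N -> f' (z i) = N%:R * d i.
  move=> i Hi; rewrite -[RHS](sum_delta (fun k => N%:R * d k) 1 N.+1 i) //.
  rewrite /f' big_nat_cond [RHS]big_nat_cond; apply: eq_bigr => k /andP[Hk _].
  by rewrite (z_inj_eq _ _ hz i k Hi Hk).
have u0 : u 0%N = f (z 1%N) by rewrite /u V_lt.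
have f0 : f 0 = f (z 1%N) by apply: H0; [rewrite lexx ler01 | left].
exists f'; split.
  by rewrite f0 H0 // ?lexx ?ler01 //; right.
move=> x Hx.
have key : forall j, (j <= N)%N -> (forall i, (1 <= i <= N)%N -> (z i < x) = (i <= j)%N) ->
    f x = u j ->
    f x = f 0 + \sum_(1 <= i < N.+1)
                    alpha R N * (if (0 <= z i) && (z i < x) then f' (z i) else 0).
  move=> j jN Hc Hfx.
  rewrite (eq_bigr (fun i => if (0 <= z i) && (z i < x) then alpha R N * f' (z i) else 0));
    last by move=> i _; case: ifP; rewrite ?mulr0.
  rewrite (sum_charR _ _ _ _ _ jN zpos Hc).
  rewrite (eq_big_nat _ _ (F2 := fun i => d i)); last first.
    move=> i /andP[i1 ij]; rewrite f'E; last by rewrite i1 (leq_trans (ltnSE ij) jN).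
    by rewrite /alpha mulrA mulVf // mul1r.
  rewrite big_add1 /= /d.
  rewrite (eq_big_nat _ _ (F2 := fun i => u i.+1 - u i)) //.
  by rewrite telescope_sumr // f0 -u0 Hfx addrC subrK.
case: (classify _ _ x N0 hz) => [h|h|[j [Hj1 /andP[h1 h2]]]].
- apply: (key 0%N) => //.
    apply: charE => i /andP[i1 iN] H; first by case: i i1 iN H.
    by apply: le_trans h (mono_le hz 1 i isT i1 iN).
  by rewrite u0 H0 //; left.
- apply: (key N) => //.
    apply: charE => i /andP[i1 iN] H; last by rewrite ltnNge iN in H.
    by apply: le_lt_trans (mono_le hz i N i1 iN (leqnn N)) h.
  by rewrite /u V_N H0 //; right.
- case/andP: Hj1 => j1 jN.
  apply: (key j) => //; first exact: ltnW.
    apply: charE => i /andP[i1 iN] H.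
      by apply: le_lt_trans (mono_le hz i j i1 H (ltnW jN)) h1.
    by apply: le_trans h2 (mono_le hz j.+1 i isT H iN).
  by rewrite /u V_lt // (Hj j x) ?j1 ?jN ?h1 ?h2.
Qed.

Definition stepf {R : realType} (N : nat) (z : nat -> R) (w : nat -> R) (x : R) : R :=
  w (cnt N z x %% N)%N.

Lemma stepf_val {R : realType} N (z : nat -> R) w m :
  (forall i : nat, (1 <= i < N)%N -> z i < z i.+1) ->
  (m < N)%N -> stepf N z w (z m.+1) = w m.
Proof.
move=> hz mN; rewrite /stepf (@cnt_char _ N z _ m) ?modn_small //; first exact: ltnW.
apply: charE => i /andP[i1 iN] H.
  by apply: (mono hz).
by apply: (mono_le hz).
Qed.

Lemma V_stepf {R : realType} N (z : nat -> R) w k :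
  (0 < N)%N ->
  (forall i : nat, (1 <= i < N)%N -> z i < z i.+1) ->
  V N z (stepf N z w) k = w (k %% N)%N.
Proof. by move=> N0 hz; rewrite /V stepf_val // ltn_pmod. Qed.

Lemma stepf_D1 {R : realType} N (z : nat -> R) w :
  (0 < N)%N -> 0 <= z 1%N -> z N < 1 ->
  (forall i : nat, (1 <= i < N)%N -> z i < z i.+1) ->
  D1mu N z (stepf N z w).
Proof.
move=> N0 z10 zN1 hz; apply: D1_step => //.
  move=> x Hx [h|h]; rewrite (stepf_val _ _ _ 0 hz N0).
    rewrite /stepf (@cnt_char _ N z x 0%N) ?mod0n //.
    apply: charE => i /andP[i1 iN] H; first by case: i i1 iN H.
    by apply: le_trans h (mono_le hz 1 i isT i1 iN).
  rewrite /stepf (@cnt_char _ N z x N) ?modnn //.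
  apply: charE => i /andP[i1 iN] H; last by rewrite ltnNge iN in H.
  by apply: le_lt_trans (mono_le hz i N i1 iN (leqnn N)) h.
move=> j x /andP[j1 jN] /andP[h1 h2]; rewrite stepf_val //.
rewrite /stepf (@cnt_char _ N z x j) ?modn_small //; first exact: ltnW.
apply: charE => i /andP[i1 iN] H.
  by apply: le_lt_trans (mono_le hz i j i1 H (ltnW jN)) h1.
by apply: le_trans h2 (mono_le hz j.+1 i isT H iN).
Qed.


Lemma eigen_lap {R : realType} N (z : nat -> R) f lam : (0 < N)%N ->
  (forall k, N%:R ^+ 2 * (V N z f k.+2 - 2 * V N z f k.+1 + V N z f k) = lam * V N z f k.+1) ->
  forall g, energy N z f g = - ipmu N z (fun x => lam * f x) g.
Proof.
move=> N0 H g; rewrite energy_lap // ipmuE; congr (- (_ * _)).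
by apply: eq_bigr => k _; rewrite H.
Qed.

Lemma eig_from {R : realType} N (z : nat -> R) f lam (phi : nat -> R) : (0 < N)%N ->
  (forall k, phi (k + N)%N = phi k) ->
  (forall k, N%:R ^+ 2 * (phi k.+2 - 2 * phi k.+1 + phi k) = lam * phi k.+1) ->
  (forall m, (m < N)%N -> f (z m.+1) = phi m) ->
  D1mu N z f ->
  (exists m, (m < N)%N /\ phi m != 0) ->
  eigenfunction N z f lam.
Proof.
move=> N0 Pp Pe Pv D1 [m [mN nz]].
have HV : forall k, V N z f k = phi k by move=> k; rewrite /V Pv ?ltn_pmod // permod.
split; first split => //.
  by move=> g _; apply: eigen_lap => // k; rewrite !HV.
by exists m.+1; rewrite Pv //; lia.
Qed.

Lemma spec_generic {R : realType} N (z : nat -> R) f c0 (psi : nat -> R) :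
  (0 < N)%N -> 0 <= z 1%N -> z N < 1 ->
  (forall i : nat, (1 <= i < N)%N -> z i < z i.+1) ->
  (forall x : R, (0 <= x <= z 1%N) \/ (z N < x <= 1) -> f x = c0) ->
  (forall j : nat, (1 <= j <= N.-1)%N -> forall x : R, z j < x <= z j.+1 -> f x = psi j) ->
  psi 0%N = c0 ->
  D1mu N z f /\ forall m, (m < N)%N -> f (z m.+1) = psi m.
Proof.
move=> N0 z10 zN1 hz S0 Sj p0.
have fz1 : f (z 1%N) = c0 by apply: S0; left; rewrite z10 lexx.
have fzj : forall j, (1 <= j < N)%N -> f (z j.+1) = psi j.
  move=> j Hj; apply: (Sj j); first lia.
  by rewrite hz // lexx.
split.
  apply: D1_step => //.
    move=> x /andP[x0 x1] [h|h]; rewrite fz1; apply: S0.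
      by left; rewrite x0 h.
    by right; rewrite h x1.
  move=> j x Hj hx; rewrite fzj //; apply: (Sj j) hx; lia.
case=> [|m] mN; first by rewrite fz1.
by apply: fzj; lia.
Qed.

Lemma trig_per {R : realType} N l (trig : R -> R) :
  (forall x n, trig (x + n%:R * (pi *+ 2)) = trig x) -> (0 < N)%N ->
  forall k, trig ((k + N)%N%:R * (2 * pi * l%:R / N%:R)) = trig (k%:R * (2 * pi * l%:R / N%:R)).
Proof.
move=> Ht N0 k.
have Nn0 : (N%:R : R) != 0 by rewrite pnatr_eq0 -lt0n.
rewrite natrD mulrDl.
have -> : N%:R * (2 * pi * l%:R / N%:R) = l%:R * (pi *+ 2) :> R by rewrite mulr2n; field.
exact: Ht.
Qed.

Lemma cos_lam {R : realType} N l k :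
  N%:R ^+ 2 * (cos (k.+2%:R * (2 * pi * l%:R / N%:R)) - 2 * cos (k.+1%:R * (2 * pi * l%:R / N%:R))
     + cos (k%:R * (2 * pi * l%:R / N%:R))) =
  lambda R N l * cos (k.+1%:R * (2 * pi * l%:R / N%:R)).
Proof. by rewrite cos_eig /lambda; ring. Qed.

Lemma sin_lam {R : realType} N l k :
  N%:R ^+ 2 * (sin (k.+2%:R * (2 * pi * l%:R / N%:R)) - 2 * sin (k.+1%:R * (2 * pi * l%:R / N%:R))
     + sin (k%:R * (2 * pi * l%:R / N%:R))) =
  lambda R N l * sin (k.+1%:R * (2 * pi * l%:R / N%:R)).
Proof. by rewrite sin_eig /lambda; ring. Qed.

Lemma arg_eq {R : realType} N j l :
  2 * pi * (j * l)%N%:R / N%:R = j%:R * (2 * pi * l%:R / N%:R) :> R.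
Proof. by rewrite natrM; ring. Qed.


Lemma fourier_kernel {R : realType} N k m : (k < N)%N -> (m < N)%N ->
  \sum_(0 <= l < N) cos (k%:R * (2 * pi * l%:R / N%:R) - m%:R * (2 * pi * l%:R / N%:R))
  = if k == m then N%:R else 0 :> R.
Proof.
move=> kN mN; case: (ltngtP k m) => H.
- rewrite -[RHS](@cos_sum0 R N (m - k)); try lia.
  apply: eq_bigr => l _; rewrite -cosN natrB; last exact: ltnW.
  congr cos; ring.
- rewrite -[RHS](@cos_sum0 R N (k - m)); try lia.
  apply: eq_bigr => l _; rewrite natrB; last exact: ltnW.
  congr cos; ring.
- rewrite H (eq_bigr (fun _ => 1)); last by move=> l _; rewrite subrr cos0.
  by rewrite sumr_const_nat subn0.
Qed.

Lemma ortho_eig {R : realType} N (z : nat -> R) f lam mu (phi : nat -> R) :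
  (0 < N)%N -> 0 <= z 1%N -> z N < 1 ->
  (forall i : nat, (1 <= i < N)%N -> z i < z i.+1) ->
  (forall g, D1mu N z g -> energy N z f g = - ipmu N z (fun x => lam * f x) g) ->
  (forall k, phi (k + N)%N = phi k) ->
  (forall k, N%:R ^+ 2 * (phi k.+2 - 2 * phi k.+1 + phi k) = mu * phi k.+1) ->
  mu != lam ->
  \sum_(0 <= k < N) V N z f k * phi k = 0.
Proof.
move=> N0 z10 zN1 hz Hlap Pp Pe Hne.
have Nn0 : (N%:R : R) != 0 by rewrite pnatr_eq0 -lt0n.
set g := stepf N z phi.
have D1g : D1mu N z g by apply: stepf_D1.
have Vg : forall k, V N z g k = phi k by move=> k; rewrite V_stepf // permod.
have E := Hlap g D1g.
rewrite energyC energy_lap // ipmuE in E.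
set S := \sum_(0 <= k < N) V N z f k.+1 * phi k.+1.
have E1 : \sum_(0 <= k < N) N%:R ^+ 2 * (V N z g k.+2 - 2 * V N z g k.+1 + V N z g k) * V N z f k.+1
   = mu * S.
  by rewrite /S mulr_sumr; apply: eq_bigr => k _; rewrite !Vg Pe; ring.
have E2 : \sum_(0 <= k < N) V N z (fun x => lam * f x) k.+1 * V N z g k.+1 = lam * S.
  by rewrite /S mulr_sumr; apply: eq_bigr => k _; rewrite !Vg /V; ring.
rewrite E1 E2 in E.
move/oppr_inj/(mulfI (invr_neq0 Nn0))/eqP: E.
rewrite -subr_eq0 -mulrBl mulf_eq0 subr_eq0 (negbTE Hne) /= => /eqP S0.
rewrite -(shiftP (fun k => V N z f k * phi k)) //.
by move=> k; rewrite V_per Pp.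
Qed.


Theorem corollary4p2 (R : realType) (N : nat) (z : nat -> R) :
  (3 <= N)%N ->
  0 <= z 1%N -> z N < 1 ->
  (forall i : nat, (1 <= i < N)%N -> z i < z i.+1) ->
  (* each lambda_l is an eigenvalue, with eigenfunction f_l *)
  (forall l : nat, (l < N)%N ->
     forall f : R -> R, eigf_spec N z l f -> eigenfunction N z f (lambda R N l)) /\
  (* and these are all the eigenvalues *)
  (forall (lam : R) (f : R -> R), eigenfunction N z f lam ->
     exists l : nat, (l < N)%N /\ lam = lambda R N l).
Proof.
move=> N3 z10 zN1 hz.
have N0 : (0 < N)%N by lia.
have Nn0 : (N%:R : R) != 0 by rewrite pnatr_eq0 -lt0n.
have Npos : (0 : R) < N%:R by rewrite ltr0n.
have zin : forall i, (1 <= i <= N)%N -> 0 <= z i <= 1.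
  move=> i /andP[i1 iN]; rewrite (le_trans z10 (mono_le hz 1 i isT i1 iN)) /=.
  exact: ltW (le_lt_trans (mono_le hz i N i1 iN (leqnn N)) zN1).
have z1le : z 1%N <= 1 by case/andP: (zin 1%N ltac:(lia)).
have zN0 : 0 <= z N by case/andP: (zin N ltac:(lia)).
split.
- move=> l lN f; rewrite /eigf_spec.
  case: eqP => [-> | l0].
  + move=> Sf.
    have [D1 Hv] : D1mu N z f /\ (forall m, (m < N)%N -> f (z m.+1) = 1).
      apply: (spec_generic _ _ _ _ (fun _ => 1)) => //.
        move=> x [/andP[x0 x1]|/andP[x0 x1]]; apply: Sf.
          by rewrite x0 (le_trans x1).
        by rewrite x1 andbT; apply: ltW (le_lt_trans zN0 x0).
      move=> j Hj x /andP[x0 x1]; apply: Sf.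
      case/andP: (zin j ltac:(lia)) => a _; case/andP: (zin j.+1 ltac:(lia)) => _ b.
      by rewrite (le_trans a (ltW x0)) (le_trans x1 b).
    apply: (eig_from _ _ _ _ (fun _ => 1)) => //.
      move=> k; rewrite /lambda mulr0 mul0r cos0; ring.
    by exists 0%N; rewrite N0 oner_neq0.
  + have lpos : (0 < l)%N by lia.
    case: ifP => [lt|ge] [S0 Sj].
    * have [D1 Hv] : D1mu N z f /\
          (forall m, (m < N)%N -> f (z m.+1) = sin (2 * pi * (m * l)%N%:R / N%:R)).
        apply: (spec_generic _ _ _ 0 (fun j => sin (2 * pi * (j * l)%N%:R / N%:R))) => //.
        by rewrite mul0n mulr0 mul0r sin0.
      apply: (eig_from _ _ _ _ (fun k => sin (k%:R * (2 * pi * l%:R / N%:R)))) => //.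
      - by move=> k /=; apply: trig_per => // x n; exact: sin_per.
      - by move=> k /=; exact: sin_lam.
      - by move=> m mN; rewrite Hv // arg_eq.
      exists 1%N; split; first lia.
      apply: lt0r_neq0; rewrite mul1r; apply: sin_gt0_pi.
      have hl : (0 : R) < l%:R by rewrite ltr0n.
      have h2 : (2 * l%:R : R) < N%:R by rewrite -natrM ltr_nat.
      have hp := pi_gt0 R.
      apply/andP; split.
        by apply: divr_gt0 => //; apply: mulr_gt0 => //; apply: mulr_gt0.
      rewrite ltr_pdivrMr //; nra.
    * have [D1 Hv] : D1mu N z f /\
          (forall m, (m < N)%N -> f (z m.+1) = cos (2 * pi * (m * l)%N%:R / N%:R)).
        apply: (spec_generic _ _ _ 1 (fun j => cos (2 * pi * (j * l)%N%:R / N%:R))) => //.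
        by rewrite mul0n mulr0 mul0r cos0.
      apply: (eig_from _ _ _ _ (fun k => cos (k%:R * (2 * pi * l%:R / N%:R)))) => //.
      - by move=> k /=; apply: trig_per => // x n; exact: cos_per.
      - by move=> k /=; exact: cos_lam.
      - by move=> m mN; rewrite Hv // arg_eq.
      by exists 0%N; rewrite N0 mul0r cos0 oner_neq0.
- move=> lam f [[D1f Hlap] [i [Hi fi]]].
  case: (pselect (exists l, (l < N)%N /\ lam = lambda R N l)) => // Hno; exfalso.
  have Hne : forall l, (l < N)%N -> lambda R N l != lam.
    by move=> l lN; apply/eqP => E; apply: Hno; exists l; split.
  have Oc : forall l, (l < N)%N ->
      \sum_(0 <= k < N) V N z f k * cos (k%:R * (2 * pi * l%:R / N%:R)) = 0.
    move=> l lN; apply: (ortho_eig _ _ f lam (lambda R N l) (fun k => cos (k%:R * (2 * pi * l%:R / N%:R)))) => //.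
      by move=> k /=; apply: trig_per => // x n; exact: cos_per.
      by move=> k /=; exact: cos_lam.
    exact: Hne.
  have Os : forall l, (l < N)%N ->
      \sum_(0 <= k < N) V N z f k * sin (k%:R * (2 * pi * l%:R / N%:R)) = 0.
    move=> l lN; apply: (ortho_eig _ _ f lam (lambda R N l) (fun k => sin (k%:R * (2 * pi * l%:R / N%:R)))) => //.
      by move=> k /=; apply: trig_per => // x n; exact: sin_per.
      by move=> k /=; exact: sin_lam.
    exact: Hne.
  have Vz : forall m, (m < N)%N -> V N z f m = 0.
    move=> m mN.
    have F1 : forall l, (l < N)%N ->
        \sum_(0 <= k < N) V N z f k * cos (k%:R * (2 * pi * l%:R / N%:R) - m%:R * (2 * pi * l%:R / N%:R)) = 0.
      move=> l lN.
      transitivity (cos (m%:R * (2 * pi * l%:R / N%:R)) *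
          \sum_(0 <= k < N) V N z f k * cos (k%:R * (2 * pi * l%:R / N%:R)) +
        sin (m%:R * (2 * pi * l%:R / N%:R)) *
          \sum_(0 <= k < N) V N z f k * sin (k%:R * (2 * pi * l%:R / N%:R))); last first.
        by rewrite Oc // Os // !mulr0 addr0.
      rewrite !mulr_sumr -big_split /=.
      by apply: eq_bigr => k _; rewrite cosB; ring.
    have : N%:R * V N z f m = 0.
      rewrite -(sum_delta (fun k => N%:R * V N z f k) 0 N m) //.
      transitivity (\sum_(0 <= k < N) V N z f k * \sum_(0 <= l < N)
          cos (k%:R * (2 * pi * l%:R / N%:R) - m%:R * (2 * pi * l%:R / N%:R))).
        rewrite big_nat_cond [RHS]big_nat_cond; apply: eq_bigr => k /andP[/andP[_ kN] _].
        rewrite fourier_kernel //; case: eqP => [->|_]; first by rewrite mulrC.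
        by rewrite mulr0.
      under eq_bigr do rewrite mulr_sumr.
      rewrite exchange_big /= big_nat_cond big1 // => l /andP[/andP[_ lN] _].
      exact: F1.
    by move/eqP; rewrite mulf_eq0 (negbTE Nn0) /= => /eqP.
  have Ei : i = i.-1.+1 by lia.
  move: fi; rewrite Ei -(V_lt N z f); last by lia.
  by rewrite Vz ?eqxx //; lia.
Qed.
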